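(* With notation as in the context, the following hold. (1) Let $(x,h)\in\widehat{\mathsf{M}}\times\mathsf{2}^{\mathbb{N}\times\mathbb{F}}$ and $(a,k)\in\mathbb{N}^2$ with $a\ge k$ and $h(k,a,b)=\mathtt{0}$ for all $b\in\mathbb{N}$. Then $\sum_{i=a}^\infty r_{\mathsf{M}}(x,h)(i)\le 2^{-k}$. (2) The image of $e_{\mathsf{M}}$ equals $\bigcap_{m\in\mathbb{N}}C_m$. (3) For every $(x,h)\in\widehat{\mathsf{M}}\times\mathsf{2}^{\mathbb{N}\times\mathbb{F}}$ we have $r_{\mathsf{M}}(x,h)\in\mathsf{M}$. (4) For every $m\in\mathbb{N}$, the set $C_m$ is clopen in $\widehat{\mathsf{M}}\times\mathsf{2}^{\mathbb{N}\times\mathbb{F}}$.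
   Context: $M_i = \{ j\cdot 2^{-i} \mid j \in \{0,\dots,2^i\}\}$; $\widehat{\mathsf{M}}=\prod_i\mathsf{M}_i$ with each $\mathsf{M}_i$ discrete on $M_i$; $\mathsf{M}$ is the subspace of $\ell_1$ (real sequences with finite $1$-norm, metric $\|x-y\|_1$) with underlying set $\{x\in\prod_i M_i:\sum_i|x(i)|<\infty\}$. The countable fan $\mathbb{F}$ is $\mathbb{N}^2\cup\{(\infty,\infty)\}$ with metric $d((a,b),(\infty,\infty))=2^{-a}$, $d((a,b),(a',b'))=\max\{2^{-a},2^{-a'}\}$ for distinct points of $\mathbb{N}^2$. $\mathsf{2}=\{\mathtt{0},\mathtt{1}\}$ is discrete. Products and exponentials are formed in the category QCB (products: sequentialisation of product topology; $\mathsf{2}^{\mathbb{N}\times\mathbb{F}}$: continuous maps $\mathbb{N}\times\mathbb{F}\to\mathsf{2}$ with the sequentialisation of the compact-open topology). Define $f(x,k,a,b)=\mathtt{0}$ if $\sum_{i=a}^{a+b}x(i)\le 2^{-k}$, else $\mathtt{1}$ (for $x\in\widehat{\mathsf{M}}$, $k,a,b\in\mathbb{N}$); $g(y)(k,a,b)=f(y,k,a,b)$, $g(y)(k,\infty,\infty)=\mathtt{0}$ for $y\in\mathsf{M}$; $e_{\mathsf{M}}(x)=(x,g(x))$. For $m\in\mathbb{N}$ let $C_m$ be the set of $(x,h)\in\widehat{\mathsf{M}}\times\mathsf{2}^{\mathbb{N}\times\mathbb{F}}$ such that $h(k,\infty,\infty)=\mathtt{0}$ and $h(k,a,b)=f(x,k,a,b)$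 for all $k,a,b\le m$. Define $r_{\mathsf{M}}(x,h)\in\prod_i M_i$ by $r_{\mathsf{M}}(x,h)(m)=x(m)$ if $(x,h)\in C_m$ and $r_{\mathsf{M}}(x,h)(m)=0$ otherwise. *)

(* Defs.v *)
From HB Require Import structures.
From mathcomp Require Import all_boot all_order all_algebra.
From mathcomp Require Import all_classical all_reals all_analysis.
From mathcomp Require Import Rstruct Rstruct_topology.

Set Implicit Arguments.
Unset Strict Implicit.
Unset Printing Implicit Defensive.
Import Order.TTheory GRing.Theory Num.Theory.
Local Open Scope classical_set_scope.
Local Open Scope ring_scope.
Notation R := Rdefinitions.R.

(** Sequentialisation of a topology: open sets are the sequentially open ones. *)
Definition seq_open {T : topologicalType} (U : set T) : Prop :=
  forall (u : nat -> T) (x : T), u @ \oo --> x -> U x -> \forall n \near \oo, U (u n).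

Definition seqz (T : topologicalType) : Type := T.
HB.instance Definition _ (T : topologicalType) := Choice.on (seqz T).

Section Seqz.
Variable T : topologicalType.
Lemma seq_openT : @seq_open T setT.
Proof. by move=> u x _ _; apply: nearW. Qed.
Lemma seq_openI : setI_closed (@seq_open T).
Proof.
move=> A B oA oB u x ux [Ax Bx].
have := oA u x ux Ax; have := oB u x ux Bx.
by move=> hB hA; near=> n; split; [near: n; exact: hA| near: n; exact: hB].
Unshelve. all: by end_near.
Qed.
Lemma seq_open_bigU (I : Type) (f : I -> set T) :
  (forall i, seq_open (f i)) -> seq_open (\bigcup_i f i).
Proof.
move=> hof u x ux [i _ fxi]; have := hof i u x ux fxi.
by apply: filterS => n fin; exists i.
Qed.
End Seqz.

HB.instance Definition _ (T : topologicalType) :=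
  isOpenTopological.Build (seqz T) (@seq_openT T) (@seq_openI T) (@seq_open_bigU T).

(** * The countable fan F = N^2 ∪ {(∞,∞)} with its metric *)
Inductive Fpt : Type := Fpair of nat & nat | Finf.

Definition Fpt_enc (p : Fpt) : option (nat * nat) :=
  if p is Fpair a b then Some (a, b) else None.
Definition Fpt_dec (o : option (nat * nat)) : Fpt :=
  if o is Some (a, b) then Fpair a b else Finf.
Lemma Fpt_encK : cancel Fpt_enc Fpt_dec. Proof. by case. Qed.
HB.instance Definition _ := Countable.copy Fpt (can_type Fpt_encK).

Definition dF (p q : Fpt) : R :=
  match p, q with
  | Finf, Finf => 0
  | Fpair a _, Finf => 2 ^- a
  | Finf, Fpair a _ => 2 ^- a
  | Fpair a b, Fpair a' b' =>
      if (a == a') && (b == b') then 0 else Num.max (2 ^- a) (2 ^- a')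
  end.

Definition F_open (U : set Fpt) : Prop :=
  forall p, U p -> exists2 e : R, 0 < e & forall q, dF p q < e -> U q.

Lemma F_openT : F_open setT.
Proof. by move=> p _; exists 1 => //. Qed.
Lemma F_openI : setI_closed F_open.
Proof.
move=> A B oA oB p [Ap Bp].
have [e1 e10 h1] := oA p Ap; have [e2 e20 h2] := oB p Bp.
exists (Num.min e1 e2); first by rewrite lt_min e10 e20.
by move=> q; rewrite lt_min => /andP[q1 q2]; split; [exact: h1|exact: h2].
Qed.
Lemma F_open_bigU (I : Type) (f : I -> set Fpt) :
  (forall i, F_open (f i)) -> F_open (\bigcup_i f i).
Proof.
move=> hf p [i _ fip]; have [e e0 he] := hf i p fip.
by exists e => // q /he fq; exists i.
Qed.
HB.instance Definition _ := isOpenTopological.Build Fpt F_openT F_openI F_open_bigU.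

(** * The exponential 2^(N x F): continuous maps N x F -> 2 with the
    sequentialisation of the compact-open topology *)
Definition NF := (nat * Fpt)%type.
Definition CO := {compact-open, NF -> bool}.
Definition cont_set : set CO := [set h : CO | continuous (h : NF -> bool)].
Definition ExpNF := seqz (set_type cont_set).

Definition hfun (h : ExpNF) : nat -> Fpt -> bool :=
  fun k p => (set_val h : NF -> bool) (k, p).

Definition inMi (i : nat) (r : R) : bool :=
  [exists j : 'I_(2 ^ i).+1, r == (j%:R / 2 ^+ i)].
Definition Mi_car (i : nat) := {r : R | inMi i r}.
Definition Mi (i : nat) := discrete_topology (Mi_car i).
Definition hatM := prod_topology (fun i : nat => Mi i).

Definition Mval (x : hatM) (i : nat) : R := sval (x i).

Lemma inMi0 i : inMi i 0.
Proof.
apply/existsP; exists ord0; by rewrite /= mul0r.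
Qed.
Definition zeroM (i : nat) : Mi i := exist _ 0 (inMi0 i).

Definition inMl1 (x : hatM) : Prop :=
  (\sum_(0 <= i <oo) (`|Mval x i|)%:E < +oo)%E.

Definition QCB := seqz (hatM * ExpNF)%type.

Definition fM (x : hatM) (k a b : nat) : bool :=
  if \sum_(a <= i < a + b + 1) Mval x i <= 2 ^- k then false else true.

Definition gfun (y : hatM) : nat -> Fpt -> bool :=
  fun k p => match p with Fpair a b => fM y k a b | Finf => false end.

Definition Cset (m : nat) : set QCB :=
  [set z : QCB |
    (forall k, (k <= m)%N -> hfun z.2 k Finf = false) /\
    (forall k a b, (k <= m)%N -> (a <= m)%N -> (b <= m)%N ->
       hfun z.2 k (Fpair a b) = fM z.1 k a b)].

Definition rM (z : QCB) : hatM :=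
  fun m => if `[< Cset m z >] then z.1 m else zeroM m.

(* Main.v *)
Require Import Defs.
From HB Require Import structures.
From mathcomp Require Import all_boot all_order all_algebra.
From mathcomp Require Import all_classical all_reals all_analysis.
From mathcomp Require Import Rstruct Rstruct_topology.
Import Order.TTheory GRing.Theory Num.Theory.
Local Open Scope classical_set_scope.
Local Open Scope ring_scope.

Lemma Mval_ge0 (x : hatM) i : 0 <= Mval x i.
Proof.
rewrite /Mval; case: (x i) => r /= /existsP [j /eqP ->].
by rewrite divr_ge0 // exprn_ge0.
Qed.

Lemma Cset_mono m m' z : (m' <= m)%N -> Cset m z -> Cset m' z.
Proof.
move=> mm' [H1 H2]; split.
  by move=> k km; apply: H1; apply: leq_trans km mm'.
move=> k a b km am bm; apply: H2; exact: leq_trans mm'.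
Qed.

Lemma MvalrM z m : Mval (rM z) m = if `[< Cset m z >] then Mval z.1 m else 0.
Proof. by rewrite /Mval /rM; case: ifP. Qed.

Lemma fM_false x k a b : fM x k a b = false -> \sum_(a <= i < a + b + 1) Mval x i <= 2 ^- k.
Proof. by rewrite /fM; case: ifP. Qed.

Lemma part1_real (z : QCB) (a k : nat) : (k <= a)%N ->
     (forall b : nat, hfun z.2 k (Fpair a b) = false) ->
  forall n, \sum_(a <= i < n) Mval (rM z) i <= 2 ^- k.
Proof.
move=> ka hb; elim=> [|n IH].
  by rewrite big_geq // invr_ge0 exprn_ge0.
case: (leqP a n) => an; last first.
  by rewrite big_geq // invr_ge0 exprn_ge0.
case: (asboolP (Cset n z)) => Cn.
  have -> : \sum_(a <= i < n.+1) Mval (rM z) i = \sum_(a <= i < a + (n - a) + 1) Mval z.1 i.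
    rewrite addn1 subnKC //; apply: eq_big_nat => i /andP[_ iN].
    rewrite MvalrM; case: asboolP => // nC; exfalso; apply: nC.
    have := @Cset_mono n i z; rewrite -ltnS; move=> /(_ iN Cn); exact.
  apply: fM_false; case: Cn => _ H2; rewrite -H2 //; [exact: leq_trans ka an|exact: leq_subr].
rewrite big_nat_recr //= MvalrM; case: asboolP => // _; rewrite addr0; exact: IH.
Qed.

Lemma part1 (z : QCB) (a k : nat) : (k <= a)%N ->
     (forall b : nat, hfun z.2 k (Fpair a b) = false) ->
     (\sum_(a <= i <oo) (Mval (rM z) i)%:E <= (2 ^- k : R)%:E)%E.
Proof.
move=> ka hb; apply: lime_le.
  by apply: is_cvg_ereal_nneg_natsum => n _; rewrite lee_fin Mval_ge0.
by apply: nearW => n; rewrite sumEFin lee_fin; exact: part1_real.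
Qed.

Lemma pow_small (e : R) : 0 < e -> \forall a \near \oo, (2 ^- a : R) < e.
Proof.
move=> e0; have := nbhs_infty_gtr (e^-1); apply: filterS => n hn.
rewrite invf_plt ?posrE ?exprn_gt0 //.
apply: (lt_le_trans hn); rewrite -natrX ler_nat; apply: ltnW; exact: ltn_expl.
Qed.

Lemma h_cont (h : ExpNF) k :
  \forall a \near \oo, forall b, hfun h k (Fpair a b) = hfun h k Finf.
Proof.
have ch : continuous (set_val h : NF -> bool).
  by have := set_valP h.
have := ch (k, Finf) _ (discrete_set1 (set_val h (k, Finf))).
rewrite /= nbhs_simpl /=.
case=> -[A B] /= [nA nB] sAB.
move: nB; rewrite nbhsE => -[U [oU UF] UB].
have [e e0 he] := oU _ UF.
have := @pow_small e e0; apply: filterS => a ha b.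
rewrite /hfun; apply: (sAB (k, Fpair a b)); split; first exact: nbhs_singleton.
by apply: UB; apply: he.
Qed.

Lemma part3 (z : QCB) : inMl1 (rM z).
Proof.
rewrite /inMl1.
case hF: (hfun z.2 0 Finf).
  rewrite eseries0 // => i _ _; rewrite MvalrM; case: asboolP => //.
    by case=> H1 _; rewrite H1 in hF.
  by rewrite normr0.
have [N _ HN] := h_cont z.2 0.
rewrite (@nneseries_split _ _ 0 N); last by move=> i _; rewrite lee_fin.
rewrite add0n; apply: lte_add_pinfty; first by rewrite sumEFin ltry.
apply: (@le_lt_trans _ _ (2 ^- 0 : R)%:E); last exact: ltry.
rewrite (@eq_eseriesr _ _ (fun i => (Mval (rM z) i)%:E)); last first.
  by move=> i _; rewrite ger0_norm // Mval_ge0.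
apply: part1 => // b; rewrite HN //=.
Qed.

Lemma seqz_cvg (T : topologicalType) (F : set_system T) (x : T) :
  Filter F -> F --> (x : seqz T) -> F --> x.
Proof.
move=> FF hF V; rewrite nbhsE => -[U [oU Ux] UV].
apply: (filterS UV); apply: hF.
have oU' : @open (seqz T) U.
  move=> u y uy Uy; apply: uy; exact: open_nbhs_nbhs.
exact: open_nbhs_nbhs.
Qed.

Lemma eval_cvg1 (u : nat -> QCB) (x : QCB) : u @ \oo --> (x : hatM * ExpNF) ->
   forall i, \forall n \near \oo, Mval (u n).1 i = Mval x.1 i.
Proof.
move=> hu i.
have h1 : (fst \o u) @ \oo --> x.1.
  by apply: continuous_cvg => //; exact: cvg_fst.
have h2 : (proj i \o (fst \o u)) @ \oo --> proj i x.1.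
  by apply: continuous_cvg => //; exact: proj_continuous.
rewrite discrete_cvg in h2.
move: h2; rewrite /= /fmap /=; apply: (@filterS nat \oo _) => n /= h; rewrite /Mval; congr sval; exact: h.
Qed.

Lemma eval_cvg2 (u : nat -> QCB) (x : QCB) : u @ \oo --> (x : hatM * ExpNF) ->
   forall k p, \forall n \near \oo, hfun (u n).2 k p = hfun x.2 k p.
Proof.
move=> hu k p.
have h1 : (snd \o u) @ \oo --> x.2.
  by apply: continuous_cvg => //; exact: cvg_snd.
have h2 : (snd \o u) @ \oo --> (x.2 : set_type cont_set).
  exact: (@seqz_cvg (set_type cont_set) _ _ _ h1).
have h3 : (set_val \o (snd \o u)) @ \oo --> (set_val x.2 : CO).
  by apply: continuous_cvg => //; exact: initial_continuous.
have FF : Filter ((set_val \o (snd \o u)) @ \oo).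
  exact: fmap_filter.
have sub : [set (set_val x.2 : CO) x0 | x0 in [set (k, p)]] `<=` [set set_val x.2 (k, p)].
  by move=> _ [q -> <-].
have := (compact_open_cvgP _ FF).1 h3 [set (k, p)] [set set_val x.2 (k, p)]
  (@compact_set1 _ (k, p)) (discrete_open _) sub.
rewrite /= /fmap /=; apply: (@filterS nat \oo _) => n /= h.
by rewrite /hfun; apply: h; exists (k, p).
Qed.

Lemma Cset_eq1 m (y x : QCB) :
  (forall i, (i <= m + m)%N -> Mval y.1 i = Mval x.1 i) ->
  (forall k, (k <= m)%N -> hfun y.2 k Finf = hfun x.2 k Finf) ->
  (forall k a b, (k <= m)%N -> (a <= m)%N -> (b <= m)%N ->
     hfun y.2 k (Fpair a b) = hfun x.2 k (Fpair a b)) ->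
  Cset m x -> Cset m y.
Proof.
move=> E1 E2 E3 [C1 C2]; split.
  by move=> k km; rewrite E2 // C1.
move=> k a b km am bm; rewrite E3 // C2 // /fM.
rewrite (@eq_big_nat _ _ _ a (a + b + 1) _ (fun i => Mval y.1 i)) //.
move=> i /andP[_ hi]; rewrite E1 //.
by rewrite -ltnS (leq_trans hi) // addn1 ltnS leq_add.
Qed.

Lemma near_all (P : nat -> nat -> Prop) N :
  (forall i, (i < N)%N -> \forall n \near \oo, P i n) ->
  \forall n \near \oo, forall i, (i < N)%N -> P i n.
Proof.
elim: N => [|N IH] H; first by apply: nearW.
have h1 := IH (fun i iN => H i (ltnW iN)).
have h2 := H N (ltnSn N).
near=> n => i; rewrite ltnS leq_eqVlt => /orP[/eqP -> | iN].
  by near: n.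
by move: i iN; near: n.
Unshelve. all: by end_near.
Qed.

Lemma Cset_near m (u : nat -> QCB) (x : QCB) : u @ \oo --> (x : hatM * ExpNF) ->
  \forall n \near \oo, (Cset m (u n) <-> Cset m x).
Proof.
move=> hu.
have E1 := near_all (fun i n => Mval (u n).1 i = Mval x.1 i) (m + m).+1
  (fun i _ => @eval_cvg1 u x hu i).
have E2 := near_all (fun k n => hfun (u n).2 k Finf = hfun x.2 k Finf) m.+1
  (fun k _ => @eval_cvg2 u x hu k Finf).
pose Q k a b n := hfun (u n).2 k (Fpair a b) = hfun x.2 k (Fpair a b).
have E3b : forall k a, \forall n \near \oo, forall b, (b < m.+1)%N -> Q k a b n.
  move=> k a; apply: (near_all (Q k a)) => b _; exact: (@eval_cvg2 u x hu k (Fpair a b)).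
have E3a : forall k, \forall n \near \oo, forall a, (a < m.+1)%N -> forall b, (b < m.+1)%N -> Q k a b n.
  move=> k; apply: (near_all (fun a n => forall b, (b < m.+1)%N -> Q k a b n)) => a _.
  exact: E3b.
have E3 := near_all (fun k n => forall a, (a < m.+1)%N -> forall b, (b < m.+1)%N -> Q k a b n) m.+1
  (fun k _ => E3a k).
near=> n.
have e1 : forall i, (i <= m + m)%N -> Mval (u n).1 i = Mval x.1 i.
  move=> i; rewrite -ltnS; move: i; near: n; exact: E1.
have e2 : forall k, (k <= m)%N -> hfun (u n).2 k Finf = hfun x.2 k Finf.
  move=> k; rewrite -ltnS; move: k; near: n; exact: E2.
have e3 : forall k a b, (k <= m)%N -> (a <= m)%N -> (b <= m)%N ->
     hfun (u n).2 k (Fpair a b) = hfun x.2 k (Fpair a b).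
  move=> k a b km am bm.
  have H : forall k, (k < m.+1)%N -> forall a, (a < m.+1)%N -> forall b, (b < m.+1)%N -> Q k a b n.
    by near: n; exact: E3.
  exact: H.
split; apply: Cset_eq1 => //.
- by move=> i hi; rewrite e1.
- by move=> k hk; rewrite e2.
- by move=> k a b ka am bm; rewrite e3.
Unshelve. all: by end_near.
Qed.


Lemma part4 m : clopen (Cset m).
Proof.
split.
  move=> u x hu Cx; have := @Cset_near m u x hu.
  by apply: (@filterS nat \oo _) => n [_ h]; apply: h.
rewrite -[Cset m]setCK closedC.
move=> u x hu nCx; have := @Cset_near m u x hu.
by apply: (@filterS nat \oo _) => n [h _] /h.
Qed.

Lemma part2 (z : QCB) :
     (exists y : hatM, inMl1 y /\ z.1 = y /\ hfun z.2 = gfun y) <->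
     (forall m : nat, Cset m z).
Proof.
split.
  case=> y [_ [e1 e2]] m; split.
    by move=> k _; rewrite e2.
  by move=> k a b _ _ _; rewrite e2 e1.
move=> C; exists z.1; split; last split => //.
  have := part3 z; rewrite /inMl1.
  rewrite (@eq_eseriesr _ _ (fun i => (`|Mval z.1 i|)%:E)) //.
  by move=> i _; rewrite MvalrM; case: asboolP.
apply/funext => k; apply/funext => -[a b|].
  by have [_ H] := C (maxn k (maxn a b)); apply: H; rewrite !leq_max !leqnn ?orbT.
by have [H _] := C k; apply: H.
Qed.

Theorem lemma3p4 :
  (* (1) *)
  (forall (z : QCB) (a k : nat), (k <= a)%N ->
     (forall b : nat, hfun z.2 k (Fpair a b) = false) ->
     (\sum_(a <= i <oo) (Mval (rM z) i)%:E <= (2 ^- k : R)%:E)%E) /\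
  (* (2) : image of e_M = \bigcap_m C_m *)
  (forall z : QCB,
     (exists y : hatM, inMl1 y /\ z.1 = y /\ hfun z.2 = gfun y) <->
     (forall m : nat, Cset m z)) /\
  (* (3) *)
  (forall z : QCB, inMl1 (rM z)) /\
  (* (4) *)
  (forall m : nat, clopen (Cset m)).
Proof.
split; first exact: part1.
split; first exact: part2.
split; first exact: part3.
exact: part4.
Qed.
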